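(* Let $T$ be an invertible operator in $\mathcal D(\mathcal P_n)$. Then for every nonconstant $f\in\mathcal P_n$ and every $v\in Z(Tf)$ there exists $u\in Z(f)$ with $|v-u|\le\varrho[T\phi_n]$.
   Context: Let $n\ge 1$ be an integer and $\mathcal P_n$ the complex vector space of polynomials in one complex variable of degree at most $n$; $\phi_k(z)=z^k/k!$. $D$ is differentiation on $\mathcal P_n$, $I$ the identity, and $\mathcal D(\mathcal P_n)$ the linear span of $I,D,\dots,D^n$. For a nonzero $f$, $Z(f)$ is the multiset of roots of $f$ (with multiplicity). For nonconstant $f$, the root radius is $\varrho[f]=\max\{|u|:u\in Z(f)\}$. *)

(* Defs.v *)
From HB Require Import structures.
From mathcomp Require Import all_boot all_order all_algebra.
From mathcomp Require Import complex.
From mathcomp Require Import reals.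
Set Implicit Arguments. Unset Strict Implicit. Unset Printing Implicit Defensive.
Import Order.TTheory GRing.Theory Num.Theory.
Local Open Scope ring_scope.

Section Defs.
Variable C : numClosedFieldType.

Definition inPn (n : nat) (p : {poly C}) : bool := (size p <= n.+1)%N.

Definition phi (k : nat) : {poly C} := (k`!%:R)^-1 *: 'X^k.

(* The element c_0 I + c_1 D + ... + c_n D^n of D(P_n), acting on polynomials *)
Definition diffOp (n : nat) (c : 'I_n.+1 -> C) (p : {poly C}) : {poly C} :=
  \sum_(k < n.+1) c k *: p^`(k).

Definition invertibleOn (n : nat) (T : {poly C} -> {poly C}) : Prop :=
  exists S : {poly C} -> {poly C},
    [/\ forall p, inPn n p -> inPn n (S p),
        forall p, inPn n p -> S (T p) = p
      & forall p, inPn n p -> T (S p) = p].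

(* Z(p) : the multiset of roots of p (meaningful for p != 0) *)
Definition Zroots (p : {poly C}) : seq C := sval (closed_field_poly_normal p).

Definition rootRadius (p : {poly C}) : C :=
  \big[Num.max/0]_(z <- Zroots p) `|z|.
End Defs.

(* Main.v *)
Require Import Defs.
From HB Require Import structures.
From mathcomp Require Import all_boot all_order all_algebra.
From mathcomp Require Import complex reals.
From mathcomp Require Import ring.
Import Order.TTheory GRing.Theory Num.Theory.
Set Implicit Arguments. Unset Strict Implicit. Unset Printing Implicit Defensive.
Local Open Scope ring_scope.


Section Disk.
Variable C : numClosedFieldType.
Variable rho : C.
Hypothesis rho0 : 0 <= rho.

Lemma rho_conj : rho^* = rho.
Proof. exact: conj_Creal (ger0_real rho0). Qed.

Lemma disk_ident (z w : C) :
  `|z^* * w - rho ^+ 2| ^+ 2 - (rho * `|z - w|) ^+ 2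
  = (`|z| ^+ 2 - rho ^+ 2) * (`|w| ^+ 2 - rho ^+ 2).
Proof.
rewrite exprMn !normCK !rmorphB !rmorphM ?rmorphXn /= conjCK rho_conj.
ring.
Qed.

Lemma mob_iff (z w : C) : rho < `|z| -> w != z ->
  (`|(`|z| ^+ 2 - rho ^+ 2) / (z - w) - z^*| <= rho) = (`|w| <= rho).
Proof.
move=> hz hw.
have zw : z - w != 0 by rewrite subr_eq0 eq_sym.
have e : (`|z| ^+ 2 - rho ^+ 2) / (z - w) - z^* = (z^* * w - rho ^+ 2) / (z - w).
  rewrite normCK. field. rewrite subr_eq0 eq_sym. done.
rewrite e normf_div ler_pdivrMr ?normr_gt0 //.
rewrite -(ler_pXn2r (_ : (0 < 2)%N)) ?nnegrE ?normr_ge0 ?mulr_ge0 //.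
rewrite -[LHS]subr_le0 disk_ident pmulr_rle0 ?subr_le0.
  by rewrite (ler_pXn2r (_ : (0 < 2)%N)) ?nnegrE ?normr_ge0.
by rewrite subr_gt0 (ltr_pXn2r (_ : (0 < 2)%N)) ?nnegrE ?normr_ge0.
Qed.
End Disk.


Section Pair.
Variable C : numClosedFieldType.

Definition pairing (N : nat) (v : C) (f Q : {poly C}) :=
  \sum_(k < N.+1) f^`(k).[v] * Q^`(N - k).[0].

Definition polar (N : nat) (z : C) (Q : {poly C}) :=
  Q *+ N - ('X - z%:P) * Q^`().

Lemma derivn_XsubCM (a : C) (g : {poly C}) k :
  (('X - a%:P) * g)^`(k) = ('X - a%:P) * g^`(k) + g^`(k.-1) *+ k.
Proof.
elim: k => [|k IH]; first by rewrite !derivn0 mulr0n addr0.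
rewrite derivnS IH derivD derivM derivXsubC mul1r derivMn -derivnS.
have -> : g^`(k.-1)^`() *+ k = g^`(k) *+ k.
  by case: k {IH} => [|k]; rewrite ?mulr0n //= -derivnS.
by rewrite /= mulrS; ring.
Qed.

Lemma pairing0 v f Q : pairing 0 v f Q = f.[v] * Q.[0].
Proof. by rewrite /pairing big_ord1. Qed.

Lemma pairing_deriv N v (g Q : {poly C}) : (size g <= N.+1)%N ->
  pairing N.+1 v g Q = pairing N v g Q^`().
Proof.
move=> hg; rewrite /pairing big_ord_recr /= -derivnS derivn_poly0 // horner0 mul0r addr0.
apply: eq_bigr => i _ /=; have hi : (i <= N)%N by rewrite -ltnS.
by rewrite subSn // derivSn.
Qed.

Lemma polar_derivn0 N z (Q : {poly C}) m :
  (polar N z Q)^`(m).[0] = Q^`(m).[0] *+ N - Q^`(m).[0] *+ m + z * Q^`(m.+1).[0].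
Proof.
rewrite /polar derivnB derivnMn derivn_XsubCM.
have -> : Q^`()^`(m.-1) *+ m = Q^`(m) *+ m.
  by case: m => [|m]; rewrite ?mulr0n //= -derivSn.
rewrite -derivSn !(hornerE, hornerMn) /=.
ring.
Qed.

Lemma pairing_XsubC N v u (g Q : {poly C}) : (size g <= N.+1)%N ->
  pairing N.+1 v (('X - u%:P) * g) Q = pairing N v g (polar N.+1 (v - u) Q).
Proof.
move=> hg; rewrite /pairing.
under eq_bigr => k _ do rewrite derivn_XsubCM hornerD hornerMn hornerM hornerXsubC mulrDl.
rewrite big_split /= big_ord_recr /= -derivnS derivn_poly0 // horner0 mulr0 mul0r addr0.
rewrite [X in _ + X]big_ord_recl mulr0n mul0r add0r -big_split /=.
apply: eq_bigr => i _; rewrite polar_derivn0 /bump /= add1n.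
have hi : (i <= N)%N by rewrite -ltnS.
rewrite subSn // subSS.
have -> : Q^`(N - i).[0] *+ N.+1 = Q^`(N - i).[0] *+ (N - i) + Q^`(N - i).[0] *+ i.+1.
  by rewrite -mulrnDr addnS subnK.
rewrite add0n -derivnS.
move: (g^`(i).[v]) (Q^`(N - i).[0]) (Q^`((N - i).+1).[0]) => a b d.
rewrite [b *+ (N - i) + _]addrC addrK mulrDr mulrnAr -mulrnAl addrC.
by rewrite [a * (_ * d)]mulrCA mulrA.
Qed.
End Pair.


Section Roots.
Variable C : numClosedFieldType.
Variable rho : C.
Hypothesis rho0 : 0 <= rho.

Definition indisk (Q : {poly C}) := forall z, root Q z -> `|z| <= rho.

Lemma logderiv (s : seq C) z : z \notin s ->
  (\prod_(r <- s) ('X - r%:P))^`().[z] =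
  (\prod_(r <- s) ('X - r%:P)).[z] * \sum_(r <- s) (z - r)^-1.
Proof.
elim: s => [|r s IH]; first by rewrite !big_nil -polyC1 derivC horner0 mulr0.
rewrite inE negb_or => /andP[zr zs].
rewrite !big_cons derivM derivXsubC mul1r hornerD !hornerM hornerXsubC IH //.
have zr' : z - r != 0 by rewrite subr_eq0.
move: ((\prod_(j <- s) ('X - j%:P)).[z]) (\sum_(j <- s) (z - j)^-1) => a b.
by field.
Qed.

Lemma prod_coef_size (s : seq C) : (\prod_(x <- s) ('X - x%:P))`_(size s) = 1.
Proof.
by move: (monic_prod_XsubC s predT (fun x => x)) => /monicP;
  rewrite lead_coefE size_prod_XsubC.
Qed.

Lemma vieta (r : C) s :
  (\prod_(x <- r :: s) ('X - x%:P))`_(size s) = - \sum_(x <- r :: s) x.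
Proof.
elim: s r => [|r' s IH] r.
  by rewrite !big_cons !big_nil mulr1 addr0 coefB coefX coefC /= sub0r.
rewrite big_cons mulrBl coefB coefXM coefCM /= IH prod_coef_size.
by rewrite [in RHS]big_cons mulr1 opprD addrC.
Qed.

Lemma contra_disk {x : C} : rho < x -> x <= rho -> False.
Proof. by move=> h1 h2; have := lt_le_trans h1 h2; rewrite ltxx. Qed.

Lemma disk_sum (s : seq C) z : rho < `|z| ->
  (forall r, r \in s -> `|r| <= rho) ->
  `|(`|z| ^+ 2 - rho ^+ 2) * \sum_(r <- s) (z - r)^-1 - z^* *+ size s|
    <= rho *+ size s.
Proof.
move=> hz; elim: s => [|r s IH] hs.
  by rewrite big_nil mulr0 subrr normr0 mulr0n.
rewrite big_cons /= !mulrS mulrDr.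
have -> : forall a b c d : C, a + b - (c + d) = (a - c) + (b - d).
  by move=> a b c d; ring.
apply: le_trans (ler_normD _ _) _; apply: lerD; last first.
  by apply: IH => x hx; apply: hs; rewrite inE hx orbT.
have hr : `|r| <= rho by apply: hs; rewrite inE eqxx.
have rz : r != z.
  by apply/eqP => e; move: hr; rewrite e => hr; exact: (contra_disk hz hr).
by rewrite (mob_iff rho0 hz rz).
Qed.

Lemma sum_norm_bound (s : seq C) : (forall r, r \in s -> `|r| <= rho) ->
  `|\sum_(r <- s) r| <= rho *+ size s.
Proof.
elim: s => [|r s IH] hs; first by rewrite big_nil normr0 mulr0n.
rewrite big_cons /= mulrS; apply: le_trans (ler_normD _ _) _; apply: lerD.
  by apply: hs; rewrite inE eqxx.
by apply: IH => x hx; apply: hs; rewrite inE hx orbT.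
Qed.

Lemma factorQ (Q : {poly C}) : Q != 0 ->
  {s : seq C | Q = lead_coef Q *: \prod_(r <- s) ('X - r%:P) & size s = (size Q).-1}.
Proof.
move=> Q0; case: (closed_field_poly_normal Q) => s hs; exists s => //.
have := congr1 (fun p : {poly C} => size p) hs; rewrite size_scale ?lead_coef_eq0 // size_prod_XsubC.
by move=> ->.
Qed.

Lemma size_exact (p : {poly C}) n : (size p <= n.+1)%N -> p`_n != 0 -> size p = n.+1.
Proof.
move=> h1 h2; apply/eqP; rewrite eqn_leq h1 /=; rewrite ltnNge; apply/negP.
by move=> /leq_sizeP /(_ n (leqnn n)) e; move: h2; rewrite e eqxx.
Qed.

Lemma not_in_disk (z : C) : ~~ (`|z| <= rho) -> rho < `|z|.
Proof. by move=> h; rewrite real_ltNge ?ger0_real ?normr_ge0. Qed.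

Lemma key (Q : {poly C}) s z :
  Q != 0 -> Q = lead_coef Q *: \prod_(r <- s) ('X - r%:P) ->
  (forall r, r \in s -> `|r| <= rho) -> rho < `|z| ->
  Q.[z] != 0 /\ Q^`().[z] = Q.[z] * \sum_(r <- s) (z - r)^-1.
Proof.
move=> Q0 hQ hs hz.
have zs : z \notin s.
  by apply/negP => /hs h; apply: (contra_disk hz h).
split.
  rewrite hQ hornerZ mulf_neq0 ?lead_coef_eq0 //.
  by move: zs; rewrite -root_prod_XsubC rootE.
by rewrite hQ derivZ !hornerZ logderiv // mulrA.
Qed.

Lemma roots_in_disk (Q : {poly C}) s : Q != 0 ->
  Q = lead_coef Q *: \prod_(r <- s) ('X - r%:P) -> indisk Q ->
  forall r, r \in s -> `|r| <= rho.
Proof.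
move=> Q0 hQ hd r hr; apply: hd; rewrite hQ rootE hornerZ mulf_eq0.
by rewrite -rootE root_prod_XsubC hr orbT.
Qed.

Lemma deriv_roots (Q : {poly C}) d : size Q = d.+2 -> indisk Q ->
  size Q^`() = d.+1 /\ indisk Q^`().
Proof.
move=> hsz hd.
have Q0 : Q != 0 by rewrite -size_poly_eq0 hsz.
case: (factorQ Q0) => s hQ hss; rewrite hsz /= in hss.
have hs := roots_in_disk Q0 hQ hd.
have lc : Q`_d.+1 != 0 by move: Q0; rewrite -lead_coef_eq0 lead_coefE hsz.
split.
  apply: size_exact; first by rewrite -ltnS -hsz lt_size_deriv.
  by rewrite coef_deriv mulrn_eq0 negb_or lc.
move=> z hz; case: (boolP (`|z| <= rho)) => // /not_in_disk hz'.
have [q0 eq] := key Q0 hQ hs hz'.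
move: hz; rewrite rootE eq mulf_eq0 (negbTE q0) /= => /eqP W0.
have := disk_sum hz' hs; rewrite W0 mulr0 sub0r normrN normrMn norm_conjC hss.
by rewrite ler_pMn2r // => h; case: (contra_disk hz' h).
Qed.

Lemma coef_polar N z (Q : {poly C}) i :
  (polar N z Q)`_i = Q`_i *+ N - Q`_i *+ i + (z * Q`_i.+1) *+ i.+1.
Proof.
rewrite /polar coefB coefMn mulrBl coefB coefXM coefCM !coef_deriv.
case: i => [|i] /=; first by rewrite mulr0n subr0 sub0r opprK mulrnAr.
by rewrite mulrnAr; move: (Q`_i.+1 *+ N) (Q`_i.+1 *+ i.+1) ((z * Q`_i.+2) *+ i.+2) => a b c; ring.
Qed.

Lemma polar_roots (Q : {poly C}) d zeta : size Q = d.+2 -> indisk Q ->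
  rho < `|zeta| -> size (polar d.+1 zeta Q) = d.+1 /\ indisk (polar d.+1 zeta Q).
Proof.
move=> hsz hd hzeta.
have Q0 : Q != 0 by rewrite -size_poly_eq0 hsz.
case: (factorQ Q0) => s hQ hss; rewrite hsz /= in hss.
have hs := roots_in_disk Q0 hQ hd.
have Qhi : forall j, (d.+2 <= j)%N -> Q`_j = 0 by apply/leq_sizeP; rewrite hsz.
split.
  apply: size_exact.
    apply/leq_sizeP => j hj; rewrite coef_polar.
    case: (ltngtP j d.+1) hj => // [hj _|hj _].
      by rewrite !Qhi ?mul0rn ?mulr0 ?mul0rn ?subrr ?addr0 // ltnW.
    by rewrite hj subrr add0r Qhi // mulr0 mul0rn.
  rewrite coef_polar mulrS addrK.
  case: s hQ hss hs => [|r s] hQ hss hs //.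
  have e1 : Q`_d = lead_coef Q * - \sum_(x <- r :: s) x.
    by rewrite {1}hQ coefZ; case: hss => <-; rewrite vieta.
  have e2 : Q`_d.+1 = lead_coef Q.
    by rewrite {1}hQ coefZ; case: hss => <-; rewrite prod_coef_size mulr1.
  rewrite e1 e2 [zeta * _]mulrC -mulrnAr -mulrDr mulf_neq0 ?lead_coef_eq0 //.
  rewrite addrC subr_eq0; apply/eqP => e.
  have := sum_norm_bound hs; rewrite -e normrMn hss ler_pMn2r // => h.
  by apply: (contra_disk hzeta h).
move=> z hz; case: (boolP (`|z| <= rho)) => // /not_in_disk hz'.
have [q0 eq] := key Q0 hQ hs hz'.
move: hz; rewrite rootE /polar !hornerE /= eq subr_eq0 => /eqP e.
have e' : (d.+1)%:R = (z - zeta) * \sum_(r <- s) (z - r)^-1.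
  apply: (mulIf q0); rewrite mulr_natl -hornerMn e; ring.
have zz : zeta != z.
  by apply/eqP => ez; move: e'; rewrite ez subrr mul0r => /eqP; rewrite pnatr_eq0.
have zz' : z - zeta != 0 by rewrite subr_eq0 eq_sym.
have W : \sum_(r <- s) (z - r)^-1 = (d.+1)%:R / (z - zeta).
  by rewrite e' [(z - zeta) * _]mulrC mulfK.
have := disk_sum hz' hs; rewrite W hss.
have -> : (`|z| ^+ 2 - rho ^+ 2) * ((d.+1)%:R / (z - zeta)) - z^* *+ d.+1
   = ((`|z| ^+ 2 - rho ^+ 2) / (z - zeta) - z^*) *+ d.+1.
  by rewrite mulrnBl -mulr_natl; congr (_ - _); ring.
rewrite normrMn ler_pMn2r // (mob_iff rho0 hz' zz) => h.
by case: (contra_disk hzeta h).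
Qed.
End Roots.


Section Grace.
Variable C : numClosedFieldType.

Lemma grace (rho v : C) : 0 <= rho -> forall (s : seq C) N (Q : {poly C}) a,
  a != 0 -> (size s <= N)%N -> size Q = N.+1 -> indisk rho Q ->
  (forall u, u \in s -> rho < `|v - u|) ->
  pairing N v (a *: \prod_(u <- s) ('X - u%:P)) Q != 0.
Proof.
move=> rho0; elim=> [|u s IH] N Q a a0 hsN hQ hd hs.
  rewrite big_nil; elim: N Q hQ hd {hsN} => [|N IHN] Q hQ hd.
    rewrite pairing0 hornerZ hornerC mulr1 horner_coef0 mulf_neq0 //.
    have Q0 : Q != 0 by rewrite -size_poly_eq0 hQ.
    by move: Q0; rewrite -lead_coef_eq0 lead_coefE hQ.
  rewrite pairing_deriv; last by rewrite size_scale // size_poly1.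
  have [h1 h2] := deriv_roots rho0 hQ hd.
  exact: IHN.
case: N hsN hQ => [|N] // hsN hQ.
rewrite big_cons scalerAr pairing_XsubC; last first.
  by rewrite size_scale // size_prod_XsubC.
have hu : rho < `|v - u| by apply: hs; rewrite inE eqxx.
have [h1 h2] := polar_roots rho0 hQ hd hu.
have hs' : forall x, x \in s -> rho < `|v - x| by move=> x hx; apply: hs; rewrite inE hx orbT.
exact: IH.
Qed.

Lemma Zroots_spec (p : {poly C}) :
  p = lead_coef p *: \prod_(z <- Zroots p) ('X - z%:P).
Proof. by rewrite /Zroots; case: closed_field_poly_normal. Qed.

Lemma Zroots_root (p : {poly C}) z : p != 0 -> (z \in Zroots p) = root p z.
Proof.
move=> p0; rewrite [in RHS](Zroots_spec p) rootE hornerZ mulf_eq0.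
by rewrite lead_coef_eq0 (negbTE p0) /= -rootE root_prod_XsubC.
Qed.

Lemma Zroots_size (p : {poly C}) : p != 0 -> size (Zroots p) = (size p).-1.
Proof.
move=> p0; have := congr1 (fun q : {poly C} => size q) (Zroots_spec p).
by rewrite /= size_scale ?lead_coef_eq0 // size_prod_XsubC => ->.
Qed.

Lemma bigmax_props (s : seq C) :
  0 <= \big[Num.max/0]_(z <- s) `|z| /\
  forall z, z \in s -> `|z| <= \big[Num.max/0]_(z <- s) `|z|.
Proof.
elim: s => [|x s [IH1 IH2]]; first by rewrite big_nil.
rewrite big_cons; set m := \big[_/_]_(_ <- _) _ in IH1 IH2 *.
have hxm : `|x| <= Num.max `|x| m /\ m <= Num.max `|x| m.
  rewrite /Order.max; case: ifP => h; first by rewrite ltW.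
  by rewrite lexx real_leNgt ?ger0_real ?normr_ge0 // h.
case: hxm => h1 h2; split; first exact: le_trans IH1 h2.
move=> z; rewrite inE => /orP[/eqP -> //|hz].
exact: le_trans (IH2 _ hz) h2.
Qed.

Lemma phi_derivn0 n m : (phi C n)^`(m).[0] = (m == n)%:R.
Proof.
rewrite /phi derivnZ derivnXn hornerZ hornerMn hornerXn.
case: (ltngtP m n) => h.
- by rewrite expr0n subn_eq0 leqNgt h /= mul0rn mulr0.
- by rewrite ffact_small // mulr0n mulr0.
- by rewrite h subnn expr0 ffactnn mulVf // pnatr_eq0 -lt0n fact_gt0.
Qed.

Lemma derivn_derivn (p : {poly C}) a b : p^`(a)^`(b) = p^`(b + a).
Proof. by elim: b => [|b IH]; rewrite ?derivn0 // derivnS IH -derivnS. Qed.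

Lemma diffOp_phi n (c : 'I_n.+1 -> C) (k : 'I_n.+1) :
  (diffOp c (phi C n))^`(n - k).[0] = c k.
Proof.
rewrite /diffOp linear_sum horner_sum.
rewrite (bigD1 k) //= big1 ?addr0.
  by rewrite derivnZ hornerZ derivn_derivn phi_derivn0 subnK ?eqxx ?mulr1 // -ltnS.
move=> j hj; rewrite derivnZ hornerZ derivn_derivn phi_derivn0.
case: eqP => [e|]; last by rewrite mulr0.
have hk : (k <= n)%N by rewrite -ltnS.
have : (n - k + j = n - k + k)%N by rewrite e subnK.
by move/addnI => /val_inj ej; move: hj; rewrite ej eqxx.
Qed.

Lemma diffOp_pairing n (c : 'I_n.+1 -> C) f v :
  (diffOp c f).[v] = pairing n v f (diffOp c (phi C n)).
Proof.
rewrite /diffOp horner_sum /pairing; apply: eq_bigr => k _.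
by rewrite hornerZ mulrC -/(diffOp c (phi C n)) diffOp_phi.
Qed.

Lemma diffOp0 n (c : 'I_n.+1 -> C) : diffOp c 0 = 0.
Proof. by rewrite /diffOp big1 // => k _; rewrite derivn_poly0 ?scaler0 ?size_poly0. Qed.

Lemma diffOp1 n (c : 'I_n.+1 -> C) : diffOp c 1 = (c ord0)%:P.
Proof.
rewrite /diffOp big_ord_recl derivn0 big1 ?addr0 ?alg_polyC //.
by move=> k _; rewrite derivn_poly0 ?scaler0 // size_poly1.
Qed.

Lemma diffOp_size n (c : 'I_n.+1 -> C) : (size (diffOp c (phi C n)) <= n.+1)%N.
Proof.
apply/leq_sizeP => j hj; rewrite /diffOp coef_sum big1 // => k _.
rewrite coefZ coef_derivn /phi coefZ coefXn.
have -> : ((k : nat) + j == n)%N = false.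
  by apply/negbTE; rewrite neq_ltn; apply/orP; right; apply: leq_trans hj (leq_addl _ _).
by rewrite mulr0 mul0rn mulr0.
Qed.
End Grace.

Local Open Scope complex_scope.

Theorem mainTheorem11 (R : realType) (n : nat) (c : 'I_n.+1 -> R[i]) :
  (1 <= n)%N ->
  invertibleOn n (diffOp c) ->
  forall f : {poly R[i]}, inPn n f -> (1 < size f)%N ->
  forall v : R[i], v \in Zroots (diffOp c f) ->
  exists2 u : R[i], u \in Zroots f & `|v - u| <= rootRadius (diffOp c (phi _ n)).
Proof.
move=> n1 [S [hS1 hS2 hS3]] f hf hsf v hv.
set Q := diffOp c (phi _ n).
have inj : forall p, inPn n p -> diffOp c p = 0 -> p = 0.
  move=> p hp e; rewrite -(hS2 _ hp) e -{1}(diffOp0 c) hS2 //.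
  by rewrite /inPn size_poly0.
have c0 : c ord0 != 0.
  apply/eqP => e; have h1 : inPn n (1 : {poly R[i]}) by rewrite /inPn size_poly1.
  have := inj 1 h1; rewrite diffOp1 e polyC0 => /(_ erefl)/eqP.
  by rewrite oner_eq0.
have sQ : size Q = n.+1.
  apply/eqP; rewrite eqn_leq diffOp_size /= ltnNge; apply/negP => h.
  move: c0; rewrite -(diffOp_phi c ord0) subn0 derivn_poly0 // horner0 eqxx.
  by [].
have Q0 : Q != 0 by rewrite -size_poly_eq0 sQ.
have [rho0 hrho] := bigmax_props (Zroots Q).
have hd : indisk (rootRadius Q) Q.
  by move=> z hz; apply: hrho; rewrite Zroots_root.
have f0 : f != 0 by rewrite -size_poly_eq0 -lt0n ltnW.
have Tf0 : diffOp c f != 0 by apply/eqP => /(inj _ hf) e; move: f0; rewrite e eqxx.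
have hv' : (diffOp c f).[v] = 0 by apply/eqP; rewrite -rootE -Zroots_root.
set s := Zroots f.
case: (boolP (has (fun u => `|v - u| <= rootRadius Q) s)).
  by move=> /hasP [u hu hle]; exists u.
move=> /hasPn hn; exfalso.
have := @grace _ (rootRadius Q) v rho0 s n Q (lead_coef f).
rewrite -Zroots_spec -diffOp_pairing hv' eqxx lead_coef_eq0 f0 sQ.
move=> HH.
have hsn : (size s <= n)%N.
  by rewrite /s Zroots_size // -ltnS prednK ?hf // ltnW.
have hall : forall u, u \in s -> rootRadius Q < `|v - u|.
  move=> u hu; have h := hn u hu; exact: not_in_disk h.
by move: (HH isT hsn erefl hd hall).
Qed.
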